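(* Let $G$ be a finite group whose set of irreducible character degrees is $cd(G) = \{1, m\}$ and whose set of conjugacy class sizes is $cc(G) = \{1, s\}$. Then $AMZA(G) = AMZL(G)$.
   Context: $cd(G)$ is the set of degrees of irreducible complex characters of $G$ and $cc(G)$ the set of sizes of conjugacy classes. For a finite group $G$, $\mathrm{Irr}(G)$ is the set of irreducible complex characters, $d_\chi=\chi(e)$, $\mathrm{Conj}(G)$ the set of conjugacy classes, $|C|$ the class size and $\chi(C)$ the value of $\chi$ on $C$. $ZL^1(G)$ is the centre of the group algebra $L^1(G)$ and $ZA(G)$ the closed span of $\mathrm{Irr}(G)$ in the Fourier algebra $A(G)$; $AMZL(G)$, $AMZA(G)$ are their amenability constants (infimum of the bounds of bounded approximate diagonals), which for finite $G$ are given by \[ AMZL(G) = \frac{1}{|G|^2}\sum_{C,C'\in\mathrm{Conj}(G)} |C||C'|\left|\sum_{\chi\in\mathrm{Irr}(G)} d_\chi^2\,\chi(C)\overline{\chi(C')}\right|,\qquad AMZA(G) = \frac{1}{|G|^2}\sum_{\chi,\chi'\in\mathrm{Irr}(G)} d_\chi d_{\chi'}\left|\sum_{C\in\mathrm{Conj}(G)} |C|^2\,\chi(C)\overline{\chi'(C)}\right|. \] *)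

(* Defs.v *)
From mathcomp Require Import all_boot all_order all_algebra all_fingroup all_solvable all_field all_character.
Set Implicit Arguments. Unset Strict Implicit. Unset Printing Implicit Defensive.
Import GRing.Theory Num.Theory.
Local Open Scope ring_scope.

Definition cdG (gT : finGroupType) (G : {group gT}) : seq algC :=
  [seq 'chi[G]_i 1%g | i : Iirr G].

Definition ccG (gT : finGroupType) (G : {group gT}) : seq nat :=
  [seq #|(C : {set gT})| | C <- enum (classes G)].

Definition AMZL (gT : finGroupType) (G : {group gT}) : algC :=
  (#|G|%:R ^+ 2)^-1 *
  \sum_(C in classes G) \sum_(C' in classes G)
     #|C|%:R * #|C'|%:R *
     `| \sum_(i : Iirr G) ('chi[G]_i 1%g) ^+ 2 * 'chi[G]_i (repr C)
                            * ('chi[G]_i (repr C'))^* |.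

Definition AMZA (gT : finGroupType) (G : {group gT}) : algC :=
  (#|G|%:R ^+ 2)^-1 *
  \sum_(i : Iirr G) \sum_(j : Iirr G)
     'chi[G]_i 1%g * 'chi[G]_j 1%g *
     `| \sum_(C in classes G) (#|C|%:R ^+ 2) * 'chi[G]_i (repr C)
                            * ('chi[G]_j (repr C))^* |.

(* Main.v *)
Require Import Defs.
From mathcomp Require Import all_boot all_order all_algebra all_fingroup all_solvable all_field all_character.
From mathcomp Require Import ring.
Set Implicit Arguments. Unset Strict Implicit. Unset Printing Implicit Defensive.
Import Order.TTheory GRing.Theory Num.Theory.
Local Open Scope ring_scope.

Section S.
Variables (gT : finGroupType) (G : {group gT}) (m s : nat).
Hypothesis hcd : forall d : algC, d \in cdG G <-> (d = 1 \/ d = m%:R).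
Hypothesis hcc : forall n : nat, n \in ccG G <-> (n = 1%N \/ n = s).
Local Notation d i := ('chi[G]_i 1%g).
Local Notation N := (#|G|%:R : algC).

Lemma sumC (F : gT -> algC) : {in G &, forall g h, F (g ^ h)%g = F g} ->
  \sum_(C in classes G) #|C|%:R * F (repr C) = \sum_(g in G) F g.
Proof. by move=> FJ; rewrite (sum_by_classes FJ). Qed.

Definition SL g h := \sum_(i : Iirr G) (d i) ^+ 2 * 'chi[G]_i g * ('chi[G]_i h)^*.

Lemma AMZL_E : AMZL G = (N ^+ 2)^-1 * \sum_(g in G) \sum_(h in G) `|SL g h|.
Proof.
rewrite /AMZL; congr (_ * _).
rewrite -sumC; last first.
  move=> g y Gg Gy; apply: eq_bigr => h Gh; congr `|_|.
  by apply: eq_bigr => i _; rewrite cfunJ.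
apply: eq_bigr => C CG; rewrite -sumC; last first.
  by move=> h y Gh Gy; congr `|_|; apply: eq_bigr => i _; rewrite (cfunJ _ h).
by rewrite big_distrr; apply: eq_bigr => C' _ /=; rewrite mulrA.
Qed.

Definition cl g : algC := #|(g ^: G)%g|%:R.

Definition SA i j := \sum_(g in G) cl g * 'chi[G]_i g * ('chi[G]_j g)^*.

Lemma AMZA_E : AMZA G = (N ^+ 2)^-1 * \sum_i \sum_j d i * d j * `|SA i j|.
Proof.
rewrite /AMZA; congr (_ * _); apply: eq_bigr => i _; apply: eq_bigr => j _.
congr (_ * `|_|); rewrite /SA -sumC; last first.
  by move=> g y Gg Gy; rewrite /cl classGidl // !cfunJ.
apply: eq_bigr => C /imsetP[x Gx ->]; rewrite /cl.
have [y Gy ->] := repr_class G x; rewrite classGidl //.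
by rewrite expr2 !mulrA.
Qed.

Lemma hd i : d i = 1 \/ d i = m%:R.
Proof. by apply/hcd/mapP; exists i; rewrite ?mem_enum. Qed.

Lemma m_gt0 : (0 < m)%N.
Proof.
have /mapP[i _ ei] : m%:R \in cdG G by apply/hcd; right.
rewrite lt0n -(eqr_nat algC) ei; apply: irr1_neq0.
Qed.

Lemma hcl g : g \in G -> #|(g ^: G)%g| = 1%N \/ #|(g ^: G)%g| = s.
Proof. by move=> Gg; apply/hcc/mapP; exists (g ^: G)%g; rewrite ?mem_enum ?mem_classes. Qed.

Lemma s_gt0 : (0 < s)%N.
Proof.
have /mapP[C CG ->] : s \in ccG G by apply/hcc; right.
rewrite mem_enum in CG; case/imsetP: CG => x Gx ->.
by rewrite card_gt0; apply/set0Pn; exists x; apply: class_refl.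
Qed.

Lemma clZ g : g \in G -> (g \in 'Z(G)%g) = (#|(g ^: G)%g| == 1%N).
Proof.
move=> Gg; apply/idP/idP.
  case/centerP=> _ cg; apply/eqP; suff ->: (g ^: G)%g = [set g] by rewrite cards1.
  by apply/cent_classP/centP.
case/cards1P=> y ey; have: g \in (g ^: G)%g by apply: class_refl.
rewrite ey inE => /eqP gy; subst y.
have /cent_classP cG := ey; apply/centerP; split=> //.
exact/centP.
Qed.

Definition M : algC := m%:R ^+ 2.
Definition lin (i : Iirr G) := d i == 1.
Definition P g h := \sum_(i | lin i) 'chi[G]_i g * ('chi[G]_i h)^*.
Definition a : algC := #|[pred i : Iirr G | lin i]|%:R.

Lemma linE i : lin i = ('chi[G]_i \is a linear_char).
Proof. by rewrite qualifE/= irr_char. Qed.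

Lemma d_ge0 i : 0 <= d i.
Proof. exact/char1_ge0/irr_char. Qed.

Lemma dsq i : d i ^+ 2 = if lin i then 1 else M.
Proof.
rewrite /lin; case: eqP => [->|ne]; first by rewrite expr1n.
by case: (hd i) => // ->.
Qed.

Lemma M_ge1 : 1 <= M.
Proof. by rewrite /M -natrX ler1n expn_gt0 m_gt0. Qed.

Lemma a_ge0 : 0 <= a.
Proof. exact: ler0n. Qed.

Lemma sum_lin1 : \sum_(i | lin i) (1 : algC) = a.
Proof. by rewrite sumr_const. Qed.

Lemma P01 g h : g \in G -> h \in G -> P g h = 0 \/ P g h = a.
Proof.
move=> Gg Gh; have [P0|nzP] := eqVneq (P g h) 0; [by left | right].
have key j : lin j -> 'chi[G]_j g * ('chi[G]_j h)^* = 1.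
  move=> lj; have Lj : 'chi[G]_j \is a linear_char by rewrite -linE.
  pose sg i := cfIirr ('chi[G]_j * 'chi[G]_i).
  have sgE i : 'chi_(sg i) = 'chi_j * 'chi_i.
    by rewrite cfIirrE // mul_lin_irr ?mem_irr.
  have sg_inj : injective sg.
    move=> i k eik; apply: irr_inj; apply: (mulrI (lin_char_unitr Lj)).
    by rewrite -!sgE eik.
  have lsg i : lin (sg i) = lin i by rewrite /lin sgE cfunE lin_char1 // mul1r.
  have : P g h = 'chi[G]_j g * ('chi[G]_j h)^* * P g h.
    rewrite {1}/P (reindex_inj sg_inj) /= /P big_distrr; apply: eq_big => i.
      by rewrite lsg.
    by move=> _; rewrite sgE !cfunE rmorphM /=; ring.
  move/eqP; rewrite -subr_eq0 -{1}[P g h]mul1r -mulrBl mulf_eq0 (negPf nzP) orbF.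
  by rewrite subr_eq0 => /eqP <-.
by rewrite /P -sum_lin1; apply: eq_bigr => i /key.
Qed.

Lemma P_ge0 g h : g \in G -> h \in G -> 0 <= P g h.
Proof. by move=> Gg Gh; case: (P01 Gg Gh) => ->; rewrite ?lexx ?a_ge0. Qed.

Lemma P_class g h : h \in G -> (g \in (h ^: G)%g) -> P g h = a.
Proof.
move=> Gh gh; have /eq_irr_mem_classP eg := gh.
rewrite /P -sum_lin1; apply: eq_bigr => i li.
rewrite eg // -normCK normC_lin_char ?expr1n // -linE; exact: li.
Qed.

Definition X g h := \sum_(i : Iirr G) 'chi[G]_i g * ('chi[G]_i h)^*.

Lemma SL_split g h : SL g h = M * X g h - (M - 1) * P g h.
Proof.
rewrite /SL /X /P (big_mkcond lin) big_distrr [in X in _ - X]big_distrr -sumrB.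
by apply: eq_bigr => i _; rewrite dsq; case: (lin i) => /=; ring.
Qed.

Lemma Ca_ge g : g \in G -> a <= #|'C_G[g]%g|%:R.
Proof.
move=> Gg; have := second_orthogonality_relation g Gg; rewrite class_refl mulr1n => <-.
rewrite (bigID lin) /= -sum_lin1 -[X in X <= _]addr0 lerD //.
  apply: ler_sum => i li; rewrite -normCK normC_lin_char ?expr1n // -linE; exact: li.
by apply: sumr_ge0 => i _; rewrite -normCK exprn_ge0.
Qed.

Lemma normSL g h : g \in G -> h \in G ->
  `|SL g h| = SL g h + 2 * (M - 1) * P g h * (g \notin (h ^: G)%g)%:R.
Proof.
move=> Gg Gh; rewrite SL_split /X second_orthogonality_relation //.
have M1 : 0 <= M - 1 by rewrite subr_ge0 M_ge1.
case: (boolP (g \in (h ^: G)%g)) => gh /=.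
  rewrite (P_class Gh gh) mulr1n mulr0 addr0 ger0_norm //.
  have -> : M * #|'C_G[g]%g|%:R - (M - 1) * a = M * (#|'C_G[g]%g|%:R - a) + a by ring.
  by rewrite addr_ge0 ?a_ge0 // mulr_ge0 ?subr_ge0 ?Ca_ge // (le_trans ler01 M_ge1).
rewrite mulr0n mulr0 sub0r normrN ger0_norm ?mulr_ge0 ?P_ge0 //; ring.
Qed.

Lemma sum_chi i : \sum_(g in G) 'chi[G]_i g = N * (i == 0)%:R.
Proof.
have := cfdot_irr i 0; rewrite irr0 cfdotE => <-.
rewrite mulrA mulfV ?neq0CG // mul1r; apply: eq_bigr => g Gg.
by rewrite cfun1E Gg conjC1 mulr1.
Qed.

Lemma sum2_chi i :
  \sum_(g in G) \sum_(h in G) 'chi[G]_i g * ('chi[G]_i h)^* = N ^+ 2 * (i == 0)%:R.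
Proof.
transitivity ((\sum_(g in G) 'chi[G]_i g) * (\sum_(h in G) 'chi[G]_i h)^*).
  by rewrite big_distrl; apply: eq_bigr => g _; rewrite rmorph_sum big_distrr.
rewrite sum_chi rmorphM /= conjC_nat.
by case: (i == 0); rewrite ?mulr0 ?mul0r ?mulr1 ?expr2 // rmorph1 mulr1.
Qed.

Lemma d0 : d 0 = 1.
Proof. by rewrite irr0 cfun1E group1. Qed.

Lemma lin0 : lin 0.
Proof. by rewrite /lin d0. Qed.

Lemma sumSL : \sum_(g in G) \sum_(h in G) SL g h = N ^+ 2.
Proof.
rewrite /SL; under eq_bigr do rewrite exchange_big /=.
rewrite exchange_big /= (bigD1 0) //= [X in _ + X]big1 ?addr0 => [|i ni0].
  have := sum2_chi 0; rewrite eqxx mulr1 => <-; apply: eq_bigr => g _.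
  by apply: eq_bigr => h _; rewrite d0 expr1n mul1r.
have := sum2_chi i; rewrite (negPf ni0) mulr0 => E.
rewrite -[RHS](mulr0 (d i ^+ 2)) -[X in _ = _ * X]E big_distrr; apply: eq_bigr => g _.
by rewrite big_distrr; apply: eq_bigr => h _ /=; rewrite mulrA.
Qed.

Lemma sumP : \sum_(g in G) \sum_(h in G) P g h = N ^+ 2.
Proof.
rewrite /P; under eq_bigr do rewrite exchange_big /=.
rewrite exchange_big /= (bigD1 0) ?lin0 //= [X in _ + X]big1 ?addr0 => [|i /andP[_ ni0]].
  by rewrite sum2_chi eqxx mulr1.
by rewrite sum2_chi (negPf ni0) mulr0.
Qed.

Definition K := \sum_(g in G) cl g.

Lemma cnt g : g \in G -> \sum_(h in G) (g \in (h ^: G)%g)%:R = cl g :> algC.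
Proof.
move=> Gg; rewrite (big_setID (g ^: G)%g) /= (setIidPr (class_subG Gg (subxx G))).
rewrite [X in _ + X]big1 ?addr0 => [|h /[!inE] /andP[hg _]]; last by rewrite class_sym (negPf hg).
rewrite /cl -sumr_const; apply: eq_bigr => h hg; by rewrite class_sym hg.
Qed.

Lemma sumPn : \sum_(g in G) \sum_(h in G) P g h * (g \notin (h ^: G)%g)%:R
   = N ^+ 2 - a * K.
Proof.
rewrite -sumP /K mulr_sumr -sumrB; apply: eq_bigr => g Gg.
rewrite -cnt // mulr_sumr -sumrB; apply: eq_bigr => h Gh.
case: (boolP (g \in (h ^: G)%g)) => gh /=.
  by rewrite (P_class Gh gh) mulr0 mulr1 subrr.
by rewrite mulr1 mulr0 subr0.
Qed.

Lemma XL : \sum_(g in G) \sum_(h in G) `|SL g h| = N ^+ 2 + 2 * (M - 1) * (N ^+ 2 - a * K).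
Proof.
rewrite -sumPn -sumSL mulr_sumr -big_split; apply: eq_bigr => g Gg /=.
rewrite mulr_sumr -big_split; apply: eq_bigr => h Gh /=.
by rewrite normSL // !mulrA.
Qed.

Definition zc : algC := #|'Z(G)%g|%:R.
Definition Q i j := \sum_(z in 'Z(G)%g) 'chi[G]_i z * ('chi[G]_j z)^*.

Lemma clE g : g \in G -> cl g = if g \in 'Z(G)%g then 1 else s%:R.
Proof.
move=> Gg; rewrite clZ // /cl; case: (hcl Gg) => ->; first by rewrite eqxx.
by case: eqP => [->|].
Qed.

Lemma sumZ (F : gT -> algC) :
  \sum_(g in G) (if g \in 'Z(G)%g then F g else 0) = \sum_(g in 'Z(G)%g) F g.
Proof.
rewrite -big_mkcondr; apply: eq_bigl => g; apply: andb_idl.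
exact: (subsetP (center_sub G)).
Qed.

Lemma SA_split i j : SA i j = s%:R * N * (i == j)%:R - (s%:R - 1) * Q i j.
Proof.
have E : \sum_(g in G) 'chi[G]_i g * ('chi[G]_j g)^* = N * (i == j)%:R.
  by rewrite -cfdot_irr cfdotE mulVKf ?neq0CG.
rewrite /SA /Q -sumZ -[s%:R * N * _]mulrA -E !mulr_sumr -sumrB.
by apply: eq_bigr => g Gg; rewrite clE //; case: (g \in 'Z(G)%g); ring.
Qed.

Lemma mu_ex i : exists2 mu : 'CF('Z(G)%g), mu \is a linear_char &
  {in 'Z(G)%g, forall z, 'chi[G]_i z = d i * mu z}.
Proof.
have [xi Lxi Exi] := cfcenter_Res 'chi[G]_i.
have sZ : 'Z(G)%g \subset ('Z('chi[G]_i))%CF.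
  by rewrite -cap_cfcenter_irr; apply: (bigcap_inf i).
exists ('Res['Z(G)%g] xi); first exact: cfRes_lin_char.
move=> z Zz; rewrite cfResE //; have Zz' := subsetP sZ z Zz.
by rewrite -(cfResE _ (cfcenter_sub _) Zz') Exi cfunE.
Qed.

Lemma Q01 i j : Q i j = 0 \/ Q i j = d i * d j * zc.
Proof.
have [mi Li Ei] := mu_ex i; have [mj Lj Ej] := mu_ex j.
have -> : Q i j = d i * d j * (zc * '[mi, mj]).
  rewrite cfdotE /zc mulVKf ?neq0CG // big_distrr.
  apply: eq_bigr => z Zz; rewrite Ei // Ej // rmorphM /= (geC0_conj (d_ge0 j)); ring.
have /irrP[k ->] := lin_char_irr Li; have /irrP[l ->] := lin_char_irr Lj.
by rewrite cfdot_irr; case: (k == l); [right; rewrite mulr1 | left; rewrite !mulr0].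
Qed.

Lemma Qii i : Q i i = d i ^+ 2 * zc.
Proof.
have [mi Li Ei] := mu_ex i.
rewrite /Q /zc -sumr_const big_distrr; apply: eq_bigr => z Zz.
rewrite Ei // rmorphM /= (geC0_conj (d_ge0 i)) mulrACA -normCK normC_lin_char //.
by rewrite expr1n !mulr1 expr2.
Qed.

Lemma Q_ge0 i j : 0 <= Q i j.
Proof.
case: (Q01 i j) => ->; rewrite ?lexx // mulr_ge0 ?ler0n // mulr_ge0 ?d_ge0 //.
Qed.

Lemma Qii_le i : Q i i <= N.
Proof.
have E : \sum_(g in G) 'chi[G]_i g * ('chi[G]_i g)^* = N.
  have := cfnorm_irr i; rewrite cfdotE => /(congr1 (fun x => N * x)).
  by rewrite mulVKf ?neq0CG // mulr1.
rewrite -E.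
rewrite (bigID (fun g => g \in 'Z(G)%g)) /= -[X in X <= _]addr0 lerD //.
  rewrite /Q le_eqVlt; apply/orP; left; apply/eqP; apply: eq_bigl => g.
  by apply/esym/andb_idl; apply: (subsetP (center_sub G)).
by apply: sumr_ge0 => g _; rewrite -normCK exprn_ge0.
Qed.

Lemma s_ge1 : 1 <= s%:R :> algC.
Proof. by rewrite ler1n s_gt0. Qed.

Lemma normSA i j :
  `|SA i j| = SA i j + 2 * (s%:R - 1) * Q i j * (i != j)%:R.
Proof.
have S1 : 0 <= s%:R - 1 :> algC by rewrite subr_ge0 s_ge1.
rewrite SA_split; case: (eqVneq i j) => [<-|nij] /=.
  rewrite mulr1 mulr0 addr0 ger0_norm //.
  have -> : s%:R * N - (s%:R - 1) * Q i i = N + (s%:R - 1) * (N - Q i i) by ring.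
  by rewrite addr_ge0 ?ler0n // mulr_ge0 // subr_ge0 Qii_le.
rewrite mulr0 sub0r normrN ger0_norm ?mulr_ge0 ?Q_ge0 //; ring.
Qed.

Lemma regE g : cfReg G g = \sum_i d i * 'chi[G]_i g.
Proof. by rewrite cfReg_sum sum_cfunE; apply: eq_bigr => i _; rewrite cfunE. Qed.

Lemma dsum2 (w : gT -> algC) (A : {set gT}) :
  \sum_i \sum_j d i * d j * (\sum_(g in A) w g * 'chi[G]_i g * ('chi[G]_j g)^*)
  = \sum_(g in A) w g * cfReg G g * (cfReg G g)^*.
Proof.
transitivity (\sum_i \sum_j \sum_(g in A)
    w g * (d i * 'chi[G]_i g) * (d j * 'chi[G]_j g)^*).
  apply: eq_bigr => i _; apply: eq_bigr => j _; rewrite big_distrr.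
  apply: eq_bigr => g _ /=; rewrite rmorphM /= (geC0_conj (d_ge0 j)); ring.
under eq_bigr do rewrite exchange_big /=.
rewrite exchange_big /=; apply: eq_bigr => g _.
rewrite regE rmorph_sum exchange_big big_distrr /=; apply: eq_bigr => j _.
by rewrite big_distrr big_distrl.
Qed.

Lemma sumReg (w : gT -> algC) (A : {set gT}) : 1%g \in A ->
  \sum_(g in A) w g * cfReg G g * (cfReg G g)^* = w 1%g * N ^+ 2.
Proof.
move=> A1; rewrite (bigD1 1%g) //= [X in _ + X]big1 ?addr0 => [|g /andP[_ ng1]].
  by rewrite cfRegE eqxx mulr1n conjC_nat expr2 mulrA.
by rewrite cfRegE (negPf ng1) mulr0n mulr0 mul0r.
Qed.

Lemma cl1 : cl 1%g = 1.
Proof. by rewrite /cl class1G cards1. Qed.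

Lemma sumSA : \sum_i \sum_j d i * d j * SA i j = N ^+ 2.
Proof. by rewrite dsum2 sumReg ?group1 // cl1 mul1r. Qed.

Lemma sumQ : \sum_i \sum_j d i * d j * Q i j = N ^+ 2.
Proof.
transitivity (\sum_i \sum_j d i * d j *
   (\sum_(g in 'Z(G)%g) (fun _ => 1) g * 'chi[G]_i g * ('chi[G]_j g)^*)).
  apply: eq_bigr => i _; apply: eq_bigr => j _; congr (_ * _).
  by apply: eq_bigr => g _; rewrite mul1r.
by rewrite dsum2 sumReg ?group1 // mul1r.
Qed.

Lemma D4 : \sum_i d i ^+ 2 * Q i i = zc * (M * N - (M - 1) * a).
Proof.
transitivity (zc * \sum_i (M * d i ^+ 2 - (M - 1) * (if lin i then 1 else 0))).
  by rewrite mulr_sumr; apply: eq_bigr => i _; rewrite Qii dsq; case: (lin i); ring.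
by rewrite sumrB -!mulr_sumr irr_sum_square -big_mkcond /= sum_lin1.
Qed.

Lemma kM : (Nirr G)%:R * M = N + (M - 1) * a.
Proof.
have -> : (Nirr G)%:R * M = \sum_(i : Iirr G) M by rewrite sumr_const card_ord mulr_natl.
rewrite -irr_sum_square -sum_lin1 (big_mkcond lin) mulr_sumr -big_split /=.
by apply: eq_bigr => i _; rewrite dsq; case: (lin i); ring.
Qed.

Lemma cl_neq0 g : g \in G -> cl g != 0.
Proof.
move=> Gg; rewrite /cl pnatr_eq0 -lt0n card_gt0; apply/set0Pn; exists g.
exact: class_refl.
Qed.

Lemma ks : (Nirr G)%:R * s%:R = N + (s%:R - 1) * zc.
Proof.
rewrite NirrE.
have -> : #|classes G|%:R = \sum_(g in G) (cl g)^-1 :> algC.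
  rewrite -sumC; last by move=> g y Gg Gy; rewrite /cl classGidl.
  rewrite -sumr_const; apply: eq_bigr => C /imsetP[x Gx ->].
  have [y Gy ->] := repr_class G x.
  by rewrite /cl classGidl // mulfV // -/(cl x) cl_neq0.
rewrite mulr_suml.
transitivity (\sum_(g in G) (1 + (s%:R - 1) * (if g \in 'Z(G)%g then 1 else 0 : algC))).
  apply: eq_bigr => g Gg; rewrite clE //; case: (g \in 'Z(G)%g).
    by rewrite invr1; ring.
  by rewrite mulVf ?mulr0 ?addr0 // pnatr_eq0 -lt0n s_gt0.
by rewrite big_split /= sumr_const -mulr_sumr sumZ sumr_const.
Qed.

Lemma Kval : K = s%:R * N - (s%:R - 1) * zc.
Proof.
rewrite /K; transitivity (\sum_(g in G) (s%:R - (s%:R - 1) * (if g \in 'Z(G)%g then 1 else 0 : algC))).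
  by apply: eq_bigr => g Gg; rewrite clE //; case: (g \in 'Z(G)%g); ring.
by rewrite sumrB sumr_const -mulr_sumr sumZ sumr_const mulr_natr.
Qed.

Lemma sumQn : \sum_i \sum_j d i * d j * Q i j * (i != j)%:R
   = N ^+ 2 - zc * (M * N - (M - 1) * a).
Proof.
rewrite -sumQ -D4 -sumrB; apply: eq_bigr => i _.
rewrite (bigD1 i) //= [X in _ = X - _](bigD1 i) //= eqxx mulr0 add0r expr2.
rewrite [X in _ = X - _]addrC addrK; apply: eq_bigr => j nji.
by rewrite eq_sym nji mulr1.
Qed.

Lemma XA : \sum_i \sum_j d i * d j * `|SA i j|
   = N ^+ 2 + 2 * (s%:R - 1) * (N ^+ 2 - zc * (M * N - (M - 1) * a)).
Proof.
rewrite -sumQn -sumSA mulr_sumr -big_split; apply: eq_bigr => i _ /=.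
rewrite mulr_sumr -big_split; apply: eq_bigr => j _ /=.
by rewrite normSA; ring.
Qed.

Lemma main : AMZA G = AMZL G.
Proof.
rewrite AMZA_E AMZL_E XA XL Kval; congr (_ * _).
apply/eqP; rewrite -subr_eq0; set k : algC := (Nirr G)%:R.
have E1 := kM; have E2 := ks; rewrite -/k in E1 E2.
apply/eqP; transitivity (2 * N * ((((M - 1) * a - (k * M - N)) * s%:R
     - ((s%:R - 1) * zc - (k * s%:R - N)) * M))); first by ring.
by rewrite E1 E2; ring.
Qed.
End S.

Theorem theorem4p6 (gT : finGroupType) (G : {group gT}) (m s : nat) :
  (forall d : algC, d \in cdG G <-> (d = 1 \/ d = m%:R)) ->
  (forall n : nat, n \in ccG G <-> (n = 1%N \/ n = s)) ->
  AMZA G = AMZL G.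
Proof. by move=> hcd hcc; apply: (main hcd hcc). Qed.
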